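(* For $n\in\mathbb{N}$, a triangular automorphism of index $n$ is the automorphism $T_n$ of $E$ with $T_n(e_j)=e_j$ for $j\ne n$ and $T_n(e_n)=-e_n+2P_n$, where $P_n\in E(e_1,\ldots,e_n)\cap E_{(1)}$. Fix $N\in\mathbb{N}$ and triangular automorphisms $T_1,\ldots,T_N$ (of indices $1,\ldots,N$) such that $P_j\in E(e_1,\ldots,e_N)\cap E_{(1)}$ for $j=1,\ldots,N$, and let $\tau_N=\langle T_1,\ldots,T_N\rangle\le\mathrm{Aut}(E)$. Then: (1) $\tau_N$ is abelian; (2) $\tau_N$ has order $2^N$; (3) every $\varphi\in\tau_N$ satisfies $\varphi^2=\mathrm{id}$, hence induces a $\mathbb{Z}_2$-grading $E_\varphi$ on $E$; (4) if $\varphi=T_{j_1}\circ\cdots\circ T_{j_s}$ with $j_1,\ldots,j_s$ pairwise distinct, then $E_\varphi$ is $\mathbb{Z}_2$-isomorphic to $E_{s^\ast}$.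
   Context: $F$ is a field of characteristic zero, $L$ an infinite-dimensional $F$-vector space with basis $e_1,e_2,\ldots$, $E$ its Grassmann algebra. $E_{(1)}$ is the span of the monomials $e_{i_1}\cdots e_{i_m}$ ($i_1<\cdots<i_m$) of odd length $m$. For $k\in\mathbb{N}$, $E(e_1,\ldots,e_k)$ is the span of all monomials having no factor among $e_1,\ldots,e_k$. $E_\varphi$ is the $\mathbb{Z}_2$-grading by the eigenspaces of $\varphi$ for $1$ (degree 0) and $-1$ (degree 1). $E_{s^\ast}$ is the grading in which $e_1,\ldots,e_s$ have degree $1$ and all other $e_i$ degree $0$. $\mathbb{Z}_2$-isomorphic means isomorphic via an algebra isomorphism preserving the degree components. *)

(* Defs.v *)
From HB Require Import structures.
From mathcomp Require Import all_boot all_order all_algebra.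
From mathcomp Require Import finmap.
From mathcomp.multinomials Require Import monalg.

Set Implicit Arguments.
Unset Strict Implicit.
Unset Printing Implicit Defensive.

Import GRing.Theory.
Local Open Scope fset_scope.
Local Open Scope ring_scope.

(* Monomials of the Grassmann algebra: a finite set A of naturals; the
   (0-based) index a in A stands for the paper's generator e_(a+1), and the
   monomial A stands for the increasing product of its generators. *)
Definition mon := {fset nat}.

Definition Grass (F : fieldType) := {malg F[mon]}.

(* number of transpositions needed to reorder e_A e_B increasingly *)
Definition inv_count (A B : mon) : nat :=
  \sum_(a <- A) \sum_(b <- B) (b < a)%N.

Section Grassmann.
Variable F : fieldType.
Local Notation E := (Grass F).

Definition Emul (x y : E) : E :=
  \sum_(A <- msupp x) \sum_(B <- msupp y)
     (if A `&` B == fset0 then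
        (x@_A * y@_B * (-1) ^+ inv_count A B) *: << A `|` B >>
      else 0).

Definition Eone : E := << fset0 >>.

(* the paper's generator e_k, for k >= 1 *)
Definition egen (k : nat) : E := << [fset k.-1] >>.

Definition Eodd (x : E) : Prop := forall A, A \in msupp x -> odd #|` A|.

(* E(e_1,...,e_k): span of monomials with no factor among e_1,...,e_k *)
Definition Eavoid (k : nat) (x : E) : Prop :=
  forall A, A \in msupp x -> forall a, a \in A -> (k <= a)%N.

Definition alg_aut (f : E -> E) : Prop :=
  [/\ forall (a : F) (x y : E), f (a *: x + y) = a *: f x + f y,
      forall x y, f (Emul x y) = Emul (f x) (f y),
      f Eone = Eone &
      bijective f].

(* a Z2-grading of E given by its two components D false (degree 0)
   and D true (degree 1) *)
Definition Z2grading (D : bool -> E -> Prop) : Prop :=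
  [/\ forall b, D b 0 /\ (forall (a : F) x y, D b x -> D b y -> D b (a *: x + y)),
      forall x, exists x0 x1, [/\ D false x0, D true x1 & x = x0 + x1],
      forall x, D false x -> D true x -> x = 0 &
      forall b c x y, D b x -> D c y -> D (addb b c) (Emul x y)].

Definition grading_of (phi : E -> E) (b : bool) (x : E) : Prop :=
  if b then phi x = - x else phi x = x.

(* E_{s*}: e_1,...,e_s have degree 1, all other e_i degree 0 *)
Definition grading_star (s : nat) (b : bool) (x : E) : Prop :=
  forall A, A \in msupp x -> odd #|` [fset a in A | (a < s)%N]| = b.

Definition Z2iso (D D' : bool -> E -> Prop) : Prop :=
  exists psi : E -> E, alg_aut psi /\ forall b x, D b x <-> D' b (psi x).

Inductive in_gen (T : nat -> E -> E) (N : nat) : (E -> E) -> Prop :=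
| gen_id : in_gen T N id
| gen_l j f : (0 < j <= N)%N -> in_gen T N f -> in_gen T N (T j \o f)
| gen_inv j g f : (0 < j <= N)%N -> cancel (T j) g -> cancel g (T j) ->
    in_gen T N f -> in_gen T N (g \o f).

End Grassmann.

(* Main.v *)
Require Import Defs.
From HB Require Import structures.
From mathcomp Require Import all_boot all_order all_algebra.
From mathcomp Require Import finmap.
From mathcomp.multinomials Require Import monalg.
From mathcomp Require Import ring.
Import GRing.Theory.
Local Open Scope fset_scope.
Local Open Scope ring_scope.
Set Implicit Arguments.
Unset Strict Implicit.
Section Basics.
Variable F : fieldType.
Local Notation E := (Grass F).

Fact lin_key : unit. Proof. by []. Qed.
Definition lin : (mon -> E) -> E -> E :=
  locked_with lin_key (fun f x => \sum_(A <- msupp x) x@_A *: f A).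
Lemma linE f x : lin f x = \sum_(A <- msupp x) x@_A *: f A.
Proof. by rewrite /lin unlock. Qed.

Lemma linEw f x (K : {fset mon}) : msupp x `<=` K ->
  lin f x = \sum_(A <- K) x@_A *: f A.
Proof.
move=> le; rewrite linE (big_fset_incl _ le) // => A _ /mcoeff_outdom ->.
by rewrite scale0r.
Qed.
Arguments linEw f {x K}.

Lemma eq_lin (f g : mon -> E) x : (forall A, f A = g A) -> lin f x = lin g x.
Proof. by move=> h; rewrite !linE; apply: eq_bigr => A _; rewrite h. Qed.

Definition lin_map (f : E -> E) := forall (a : F) x y, f (a *: x + y) = a *: f x + f y.

Lemma lin_lin f : lin_map (lin f).
Proof.
move=> a x y.
set K := msupp x `|` msupp y.
have h1 : msupp x `<=` K := fsubsetUl _ _.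
have h2 : msupp y `<=` K := fsubsetUr _ _.
have h3 : msupp (a *: x + y) `<=` K.
  apply: fsubset_trans (msuppD_le _ _) _; apply: fsetUSS => //.
  exact: fsubset_trans (msuppZ_le _ _) _.
rewrite (linEw _ h1) (linEw _ h2) (linEw _ h3) scaler_sumr -big_split /=.
by apply: eq_bigr => A _; rewrite mcoeffD mcoeffZ scalerDl scalerA.
Qed.

Lemma lin_funlin (a : F) f g x :
  lin (fun A => a *: f A + g A) x = a *: lin f x + lin g x.
Proof.
rewrite !linE scaler_sumr -big_split /=; apply: eq_bigr => A _.
by rewrite scalerDr !scalerA mulrC.
Qed.

Section LM.
Variable f : E -> E.
Hypothesis hf : lin_map f.
Lemma lm0 : f 0 = 0.
Proof.
have := hf 1 0 0; rewrite !scale1r addr0 => h.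
by apply: (addrI (f 0)); rewrite addr0 -h.
Qed.
Lemma lmD x y : f (x + y) = f x + f y.
Proof. by have := hf 1 x y; rewrite !scale1r. Qed.
Lemma lmZ a x : f (a *: x) = a *: f x.
Proof. have := hf a x 0; rewrite addr0 => ->; by rewrite lm0 addr0. Qed.
Lemma lmN x : f (- x) = - f x.
Proof. by rewrite -scaleN1r lmZ scaleN1r. Qed.
Lemma lmB x y : f (x - y) = f x - f y.
Proof. by rewrite lmD lmN. Qed.
Lemma lm_sum (I : Type) (r : seq I) (g : I -> E) :
  f (\sum_(i <- r) g i) = \sum_(i <- r) f (g i).
Proof.
elim: r => [|i r IH]; first by rewrite !big_nil lm0.
by rewrite !big_cons lmD IH.
Qed.
End LM.

Lemma lin_comp f g : lin_map f -> lin_map g -> lin_map (f \o g).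
Proof. by move=> hf hg a x y /=; rewrite hg hf. Qed.

Lemma lin_id : lin_map id.
Proof. by []. Qed.

Lemma malgUZ (c : F) (A : mon) : << c *g A >> = c *: (<< A >> : E).
Proof.
apply/malgP => k; rewrite mcoeffZ !mcoeffU.
by case: eqP => _; rewrite ?mulr1 ?mulr0.
Qed.

Lemma expand (x : E) : x = \sum_(A <- msupp x) x@_A *: << A >>.
Proof.
rewrite {1}(monalgE x); apply: eq_bigr => A _; exact: malgUZ.
Qed.

Lemma lin_expand f x : lin_map f -> f x = lin (fun A => f << A >>) x.
Proof.
move=> hf; rewrite {1}(expand x) (lm_sum hf) linE; apply: eq_bigr => A _.
exact: lmZ.
Qed.

Lemma ext_mon f g : lin_map f -> lin_map g ->
  (forall A, f << A >> = g << A >>) -> forall x, f x = g x.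
Proof.
move=> hf hg h x; rewrite (lin_expand _ hf) (lin_expand _ hg).
by apply: eq_lin.
Qed.

Lemma msuppU1' (A : mon) : msupp (<< A >> : E) = [fset A].
Proof. by rewrite msuppU oner_eq0. Qed.

Lemma lin_U f A : lin f << A >> = f A.
Proof. by rewrite linE msuppU1' big_seq_fset1 mcoeffUU scale1r. Qed.

End Basics.
Fact EM_key : unit. Proof. by []. Qed.
Definition EM {F : fieldType} : Grass F -> Grass F -> Grass F :=
  locked_with EM_key (@Emul F).
Lemma EME (F : fieldType) (x y : Grass F) : EM x y = Emul x y.
Proof. by rewrite /EM unlock. Qed.

Section Mul.
Variable F : fieldType.
Local Notation E := (Grass F).

Definition mm (A B : mon) : E :=
  if A `&` B == fset0 then (-1) ^+ inv_count A B *: << A `|` B >> else 0.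

Lemma EMlin (x y : E) : EM x y = lin (fun A => lin (mm A) y) x.
Proof.
rewrite EME /Emul linE; apply: eq_bigr => A _; rewrite linE scaler_sumr.
apply: eq_bigr => B _.
rewrite /mm.
case: (A `&` B == fset0).
  by rewrite scalerA scalerA.
by rewrite scaler0 scaler0.
Qed.

Lemma EM_linl z : lin_map (fun x : E => EM x z).
Proof. by move=> a x y; rewrite !EMlin lin_lin. Qed.

Lemma EM_linr z : lin_map (fun x : E => EM z x).
Proof.
move=> a x y; rewrite !EMlin -lin_funlin; apply: eq_lin => A.
by rewrite lin_lin.
Qed.

Lemma EMU A B : EM (<< A >> : E) << B >> = mm A B.
Proof. by rewrite EMlin !lin_U. Qed.

Lemma EM0l z : EM 0 z = 0 :> E.
Proof. exact: (lm0 (EM_linl z)). Qed.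
Lemma EM0r z : EM z 0 = 0 :> E.
Proof. exact: (lm0 (EM_linr z)). Qed.
Lemma EMZl a x z : EM (a *: x) z = a *: EM x z :> E.
Proof. exact: (lmZ (EM_linl z)). Qed.
Lemma EMZr a x z : EM z (a *: x) = a *: EM z x :> E.
Proof. exact: (lmZ (EM_linr z)). Qed.
Lemma EMNl x z : EM (- x) z = - EM x z :> E.
Proof. exact: (lmN (EM_linl z)). Qed.
Lemma EMNr x z : EM z (- x) = - EM z x :> E.
Proof. exact: (lmN (EM_linr z)). Qed.
Lemma EMDl x y z : EM (x + y) z = EM x z + EM y z :> E.
Proof. exact: (lmD (EM_linl z)). Qed.
Lemma EMDr x y z : EM z (x + y) = EM z x + EM z y :> E.
Proof. exact: (lmD (EM_linr z)). Qed.

Lemma sum0_nat (A : mon) : \sum_(a <- A) 0 = 0%N.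
Proof. by rewrite big1. Qed.

Lemma EM1l x : EM (Eone F) x = x.
Proof.
apply: (ext_mon (f := fun x => EM (Eone F) x) (g := id)) => //.
  exact: EM_linr.
move=> B /=; rewrite /Eone EMU /mm fset0I eqxx fset0U.
by rewrite /inv_count big_seq_fset0 expr0 scale1r.
Qed.

Lemma EM1r x : EM x (Eone F) = x.
Proof.
apply: (ext_mon (f := fun x => EM x (Eone F)) (g := id)) => //.
  exact: EM_linl.
move=> B /=; rewrite /Eone EMU /mm fsetI0 eqxx fsetU0.
rewrite /inv_count big1 ?expr0 ?scale1r // => a _.
by rewrite big_seq_fset0.
Qed.

Lemma disj_mem (A B : mon) a : A `&` B == fset0 -> a \in A -> a \in B -> False.
Proof.
move=> /eqP h aA aB; have : a \in A `&` B by rewrite inE aA aB.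
by rewrite h inE.
Qed.

Lemma sumU (G : nat -> nat) (A B : mon) : A `&` B == fset0 ->
  \sum_(a <- A `|` B) G a = (\sum_(a <- A) G a + \sum_(a <- B) G a)%N.
Proof.
move=> d; rewrite (big_fsetID _ (fun x => x \in A)); congr (_ + _)%N.
  by apply: eq_fbigl => x; rewrite !inE /=; case: (x \in A); rewrite ?andbT ?andbF.
apply: eq_fbigl => x; rewrite !inE /=.
case xB: (x \in B); case xA: (x \in A) => //=.
by case: (disj_mem d xA xB).
Qed.

Lemma invU_l A B C : A `&` B == fset0 ->
  inv_count (A `|` B) C = (inv_count A C + inv_count B C)%N.
Proof. by move=> d; rewrite /inv_count sumU. Qed.

Lemma invU_r A B C : B `&` C == fset0 ->
  inv_count A (B `|` C) = (inv_count A B + inv_count A C)%N.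
Proof.
move=> d; rewrite /inv_count -big_split /=; apply: eq_bigr => a _.
by rewrite sumU.
Qed.

Lemma inv_swap A B : A `&` B == fset0 ->
  (inv_count A B + inv_count B A)%N = (#|` A| * #|` B|)%N.
Proof.
move=> d; rewrite /inv_count [X in (_ + X)%N]exchange_big /= -big_split /=.
rewrite card_fset_sum1 big_distrl /=; rewrite big_seq [RHS]big_seq.
apply: eq_bigr => a aA; rewrite mul1n -big_split /= card_fset_sum1 big_seq [RHS]big_seq.
apply: eq_bigr => b bB.
have : a != b by apply/eqP => ab; subst b; case: (disj_mem d aA bB).
by case: (ltngtP a b).
Qed.

End Mul.
Section Assoc.
Variable F : fieldType.
Local Notation E := (Grass F).
Lemma mon3 A B C : EM (EM (<< A >> : E) << B >>) << C >> =
                          EM << A >> (EM << B >> << C >>).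
Proof.
rewrite !EMU /mm.
case dAB: (A `&` B == fset0); case dBC: (B `&` C == fset0).
- rewrite EMZl EMZr !EMU /mm fsetIUl fsetIUr !fsetU_eq0 dAB dBC andbT.
  case dAC: (A `&` C == fset0); last by rewrite scaler0 scaler0.
  rewrite scalerA scalerA (invU_l _ dAB) (invU_r _ dBC) fsetUA.
  rewrite exprD exprD; congr (_ *: _).
  ring.
- rewrite EMZl EM0r !EMU /mm fsetIUl !fsetU_eq0 dBC andbF.
  by rewrite scaler0.
- rewrite EMZr EM0l !EMU /mm fsetIUr !fsetU_eq0 dAB /=.
  by rewrite scaler0.
- by rewrite EM0l EM0r.
Qed.
End Assoc.
Section Assoc2.
Variable F : fieldType.
Local Notation E := (Grass F).
Lemma EM_assoc (x y z : E) : EM (EM x y) z = EM x (EM y z).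
Proof.
have h1 : forall A B (z : E), EM (EM (<< A >> : E) << B >>) z = EM << A >> (EM << B >> z).
  move=> A B; apply: ext_mon.
  - exact: EM_linr.
  - exact: (lin_comp (EM_linr _) (EM_linr _)).
  - exact: mon3.
have h2 : forall A (y z : E), EM (EM (<< A >> : E) y) z = EM << A >> (EM y z).
  move=> A y0 z0.
  have := @ext_mon F (fun y => EM (EM (<< A >> : E) y) z0) (fun y => EM << A >> (EM y z0)).
  apply.
  - exact: (lin_comp (EM_linl _) (EM_linr _)).
  - exact: (lin_comp (EM_linr _) (EM_linl _)).
  - by move=> B; apply: h1.
have := @ext_mon F (fun x => EM (EM x y) z) (fun x => EM x (EM y z)).
apply.
- exact: (lin_comp (EM_linl _) (EM_linl _)).
- exact: EM_linl.
- by move=> A; apply: h2.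
Qed.
End Assoc2.
Section Odd.
Variable F : fieldType.
Hypothesis two_nz : (2%:R : F) != 0.
Local Notation E := (Grass F).

Lemma sign_swap A B : A `&` B == fset0 -> odd #|` A| -> odd #|` B| ->
  ((-1) ^+ inv_count A B : F) = - (-1) ^+ inv_count B A.
Proof.
move=> d oA oB; have := inv_swap d.
move/(congr1 odd); rewrite oddD oddM oA oB /= => h.
rewrite -signr_odd -[in RHS]signr_odd.
have -> : odd (inv_count A B) = ~~ odd (inv_count B A).
  by move: h; case: (odd (inv_count A B)); case: (odd (inv_count B A)).
by case: (odd (inv_count B A)); rewrite /= ?expr0 ?expr1 ?opprK.
Qed.

Lemma EM_anti (x y : E) : Eodd x -> Eodd y -> EM x y = - EM y x.
Proof.
move=> ox oy; rewrite !EME /Emul [in RHS]exchange_big /= -sumrN.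
rewrite big_seq [RHS]big_seq; apply: eq_bigr => A hA.
rewrite -sumrN big_seq [RHS]big_seq; apply: eq_bigr => B hB.
rewrite [B `&` A]fsetIC; case d: (A `&` B == fset0); last by rewrite oppr0.
rewrite [B `|` A]fsetUC -scaleNr; congr (_ *: _).
rewrite (sign_swap d (ox _ hA) (oy _ hB)).
by ring.
Qed.

Lemma EM_sq (x : E) : Eodd x -> EM x x = 0.
Proof.
move=> ox; have h := EM_anti ox ox.
have : (2%:R : F) *: EM x x = 0.
  by rewrite scaler_nat mulr2n {1}h addNr.
by move/eqP; rewrite scaler_eq0 (negbTE two_nz) /= => /eqP.
Qed.

Lemma Eodd0 : Eodd (0 : E).
Proof. by move=> A; rewrite msupp0 inE. Qed.

Lemma EoddD (x y : E) : Eodd x -> Eodd y -> Eodd (x + y).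
Proof.
move=> ox oy A /(fsubsetP (msuppD_le _ _)); rewrite inE => /orP[]; [exact: ox|exact: oy].
Qed.

Lemma EoddZ a (x : E) : Eodd x -> Eodd (a *: x).
Proof. by move=> ox A /(fsubsetP (msuppZ_le _ _)); exact: ox. Qed.

Lemma EoddN (x : E) : Eodd x -> Eodd (- x).
Proof. by move=> ox A; rewrite msuppN; exact: ox. Qed.

Lemma Eodd1 a : Eodd (<< [fset a] >> : E).
Proof. by move=> A; rewrite msuppU1' inE => /eqP ->; rewrite cardfs1. Qed.

End Odd.
Lemma mon_ind (Pr : mon -> Prop) : Pr fset0 ->
  (forall c (A : mon), c \notin A -> (forall a, a \in A -> (c < a)%N) -> Pr A -> Pr (c |` A)) ->
  forall A, Pr A.
Proof.
move=> P0 PS A; move: {2}#|` A| (leqnn #|` A|) => n; elim: n A => [|n IH] A hA.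
  by move: hA; rewrite leqn0 cardfs_eq0 => /eqP ->.
have [->|nz] := eqVneq A fset0; first exact: P0.
have ex : exists k, k \in A by apply/fset0Pn.
pose c := ex_minn ex.
have cA : c \in A by rewrite /c; case: ex_minnP.
have cmin : forall a, a \in A -> (c <= a)%N by rewrite /c; case: ex_minnP.
rewrite -(fsetD1K cA); apply: PS.
- by rewrite !inE eqxx.
- move=> a; rewrite !inE => /andP[ac aA]; rewrite ltn_neqAle eq_sym ac cmin //.
- apply: IH; move: hA; rewrite (cardfsD1 c A) cA add1n ltnS //.
Qed.

Section Gen.
Variable F : fieldType.
Local Notation E := (Grass F).

Lemma mon_split c (A : mon) : c \notin A -> (forall a, a \in A -> (c < a)%N) ->
  (<< c |` A >> : E) = EM << [fset c] >> << A >>.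
Proof.
move=> cA cmin; rewrite EMU /mm.
have -> : [fset c] `&` A == fset0.
  apply/eqP/fsetP => x; rewrite !inE; apply/negP => /andP[/eqP -> ].
  by rewrite (negbTE cA).
rewrite /inv_count big_seq_fset1 big_seq big1 ?expr0 ?scale1r // => b /cmin hb.
by rewrite ltnNge (ltnW hb).
Qed.

Definition AH (g : E -> E) :=
  [/\ lin_map g, forall x y, g (EM x y) = EM (g x) (g y) & g (Eone F) = Eone F].

Lemma AH_comp f g : AH f -> AH g -> AH (f \o g).
Proof.
move=> [f1 f2 f3] [g1 g2 g3]; split => /=.
- exact: lin_comp.
- by move=> x y; rewrite g2 f2.
- by rewrite g3 f3.
Qed.

Lemma AH_id : AH id.
Proof. by split. Qed.

Lemma aut_AH g : alg_aut g -> AH g.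
Proof. by case=> h1 h2 h3 _; split => // x y; rewrite !EME. Qed.

Lemma agree_mon g h : AH g -> AH h -> forall A : mon,
  (forall a, a \in A -> g << [fset a] >> = h << [fset a] >>) -> g << A >> = h << A >>.
Proof.
move=> [g1 g2 g3] [h1 h2 h3]; apply: mon_ind.
  by move=> _; rewrite -/(Eone F) g3 h3.
move=> c A cA cmin IH hA; rewrite mon_split // g2 h2 hA ?IH //.
- by move=> a aA; apply: hA; rewrite inE aA orbT.
- by rewrite !inE eqxx.
Qed.

Lemma agree g h (x : E) : AH g -> AH h ->
  (forall A a, A \in msupp x -> a \in A -> g << [fset a] >> = h << [fset a] >>) ->
  g x = h x.
Proof.
move=> hg hh hx; have [g1 _ _] := hg; have [h1 _ _] := hh.
rewrite (lin_expand _ g1) (lin_expand _ h1) !linE big_seq [RHS]big_seq.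
apply: eq_bigr => A hA; rewrite (agree_mon hg hh) // => a aA.
exact: hx hA aA.
Qed.

Lemma agree_all g h (x : E) : AH g -> AH h ->
  (forall a, g << [fset a] >> = h << [fset a] >>) -> g x = h x.
Proof. by move=> hg hh hx; apply: agree. Qed.

End Gen.
Fact prodS_key : unit. Proof. by []. Qed.
Section Subst.
Variable F : fieldType.
Hypothesis two_nz : (2%:R : F) != 0.
Local Notation E := (Grass F).
Variable u : nat -> E.
Hypothesis hu : forall a, Eodd (u a).

Definition prodS : mon -> E := locked_with prodS_key
  (fun A => foldr (fun a acc => EM (u a) acc) (Eone F) (sort leq (enum_fset A))).
Lemma prodSE A : prodS A =
  foldr (fun a acc => EM (u a) acc) (Eone F) (sort leq (enum_fset A)).
Proof. by rewrite /prodS unlock. Qed.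

Lemma prodS0 : prodS fset0 = Eone F.
Proof.
have : #|` (fset0 : mon)| = 0%N by exact: cardfs0.
by rewrite prodSE; case: (enum_fset fset0).
Qed.

Lemma prodS_U1 c A : c \notin A -> (forall a, a \in A -> (c < a)%N) ->
  prodS (c |` A) = EM (u c) (prodS A).
Proof.
move=> cA cmin; rewrite !prodSE.
have p1 : perm_eq (enum_fset (c |` A)) (c :: enum_fset A).
  apply: uniq_perm; first exact: fset_uniq.
    by rewrite /= cA fset_uniq.
  by move=> x; rewrite in_cons !inE.
have -> : sort leq (enum_fset (c |` A)) = c :: sort leq (enum_fset A).
  rewrite (perm_sortP leq_total leq_trans anti_leq _ _ p1).
  have p2 : perm_eq (c :: enum_fset A) (c :: sort leq (enum_fset A)).
    by rewrite perm_cons perm_sym perm_sort.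
  rewrite (perm_sortP leq_total leq_trans anti_leq _ _ p2).
  apply: sorted_sort; first exact: leq_trans.
  rewrite /= path_sortedE; last exact: leq_trans.
  rewrite sort_sorted ?andbT; last exact: leq_total.
  by apply/allP => x; rewrite mem_sort => /cmin /ltnW.
by [].
Qed.

Definition Subst (x : E) : E := lin prodS x.

Lemma Subst_lin : lin_map Subst.
Proof. exact: lin_lin. Qed.

Lemma SubstU A : Subst << A >> = prodS A.
Proof. exact: lin_U. Qed.

Lemma Subst1 : Subst (Eone F) = Eone F.
Proof. by rewrite /Eone SubstU prodS0. Qed.

Lemma Subst_gen a : Subst << [fset a] >> = u a.
Proof.
by rewrite -(fsetU0 [fset a]) SubstU prodS_U1 ?prodS0 ?EM1r.
Qed.

Lemma prodS_ins a : forall C, (a \in C -> EM (u a) (prodS C) = 0) /\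
  (a \notin C -> prodS (a |` C) =
     (-1) ^+ (\sum_(c <- C) (c < a)%N)%N *: EM (u a) (prodS C)).
Proof.
apply: mon_ind.
  split; first by rewrite !inE.
  move=> _; rewrite big_seq_fset0 expr0 scale1r prodS0.
  by rewrite prodS_U1 ?inE // prodS0.
move=> c C cC cmin [IH1 IH2]; split.
  rewrite prodS_U1 // !inE => /orP[/eqP ->|aC].
    by rewrite -EM_assoc EM_sq // EM0l.
  rewrite -EM_assoc (EM_anti (@hu a) (@hu c)) EMNl EM_assoc IH1 //.
  by rewrite EM0r oppr0.
rewrite !inE negb_or => /andP[ac aC].
have [lt_ac|lt_ca] := ltnP a c.
  have hx : forall x, x \in c |` C -> (a < x)%N.
    move=> x; rewrite !inE => /orP[/eqP ->//|/cmin]; exact: ltn_trans.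
  have haC : a \notin c |` C by rewrite !inE negb_or ac aC.
  have -> : \sum_(x <- c |` C) nat_of_bool (x < a)%N = 0%N.
    by rewrite big1_fset // => x /hx h _; rewrite ltnNge ltnW.
  by rewrite expr0 scale1r (prodS_U1 haC hx).
have lt_ca' : (c < a)%N by rewrite ltn_neqAle eq_sym ac lt_ca.
have -> : a |` (c |` C) = c |` (a |` C).
  by apply/fsetP => x; rewrite !inE; case: (x == a); case: (x == c).
have hc : c \notin a |` C by rewrite !inE negb_or eq_sym ac cC.
have hcm : forall x, x \in a |` C -> (c < x)%N.
  by move=> x; rewrite !inE => /orP[/eqP ->//|/cmin //].
rewrite (prodS_U1 hc hcm) (IH2 aC) EMZr -EM_assoc (EM_anti (@hu c) (@hu a)).
rewrite EMNl.
rewrite EM_assoc.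
rewrite -(prodS_U1 cC cmin).
rewrite big_fsetU1; last exact: cC.
rewrite lt_ca' exprD expr1.
by rewrite scalerN mulN1r scaleNr.
Qed.

Lemma Subst_L a (z : E) : Subst (EM << [fset a] >> z) = EM (u a) (Subst z).
Proof.
move: z; apply: ext_mon.
- exact: (lin_comp Subst_lin (EM_linr _)).
- exact: (lin_comp (EM_linr _) Subst_lin).
move=> C /=; rewrite EMU /mm SubstU.
have [aC|aC] := boolP (a \in C).
  have -> : ([fset a] `&` C == fset0) = false.
    apply/negP => /eqP/fsetP/(_ a); rewrite !inE eqxx aC.
    by [].
  by rewrite (lm0 Subst_lin) (proj1 (prodS_ins a C)).
have -> : ([fset a] `&` C == fset0).
  apply/eqP/fsetP => x; rewrite !inE; apply/negP => /andP[/eqP -> ].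
  by rewrite (negbTE aC).
rewrite (lmZ Subst_lin) SubstU (proj2 (prodS_ins a C)) // scalerA.
rewrite /inv_count big_seq_fset1 -expr2 -exprM mulnC exprM sqrrN expr1n.
by rewrite expr1n scale1r.
Qed.

End Subst.
Section Subst2.
Variable F : fieldType.
Hypothesis two_nz : (2%:R : F) != 0.
Local Notation E := (Grass F).
Variable u : nat -> E.
Hypothesis hu : forall a, Eodd (u a).
Local Notation Subst := (Subst u).
Local Notation Subst_L := (Subst_L two_nz hu).
Local Notation Subst_lin := (@Subst_lin F u).
Local Notation Subst1 := (@Subst1 F u).
Lemma Subst_mul (x y : E) : Subst (EM x y) = EM (Subst x) (Subst y).
Proof.
have h1 : forall A B, Subst (EM << A >> << B >>) = EM (Subst << A >>) (Subst << B >>).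
  move=> A B; move: A; apply: mon_ind.
    by rewrite -/(Eone F) EM1l Subst1 EM1l.
  move=> c A cA cmin IH.
  rewrite (@mon_split F c A cA cmin).
  rewrite EM_assoc.
  rewrite Subst_L.
  rewrite IH.
  by rewrite -(EM_assoc (u c)) -(Subst_L c << A >>).
have h2 : forall A y, Subst (EM << A >> y) = EM (Subst << A >>) (Subst y).
  move=> A; apply: ext_mon.
  - exact: (lin_comp Subst_lin (EM_linr _)).
  - exact: (lin_comp (EM_linr _) Subst_lin).
  - exact: h1.
move: x; apply: ext_mon.
- exact: (lin_comp Subst_lin (EM_linl _)).
- exact: (lin_comp (EM_linl _) Subst_lin).
- by move=> A; exact: h2.
Qed.

Lemma Subst_AH : AH Subst.
Proof. split; [exact: Subst_lin | exact: Subst_mul | exact: Subst1]. Qed.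

End Subst2.
Section Grading.
Variable F : fieldType.
Hypothesis two_nz : (2%:R : F) != 0.
Local Notation E := (Grass F).

Lemma AH_ext (f g : E -> E) : AH g -> f =1 g -> AH f.
Proof.
move=> [g1 g2 g3] fg; split.
- by move=> a x y; rewrite !fg g1.
- by move=> x y; rewrite !fg g2.
- by rewrite fg g3.
Qed.

Lemma grading_Z2 (phi : E -> E) : AH phi -> (forall x, phi (phi x) = x) ->
  Z2grading (grading_of phi).
Proof.
move=> [p1 p2 p3] inv; split.
- move=> b; split.
    by rewrite /grading_of (lm0 p1); case: b; rewrite ?oppr0.
  move=> a x y; rewrite /grading_of p1; case: b => -> ->.
    by rewrite scalerN opprD.
  by [].
- move=> x; exists ((2%:R)^-1 *: (x + phi x)), ((2%:R)^-1 *: (x - phi x)).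
  split; rewrite /grading_of.
  + by rewrite (lmZ p1) (lmD p1) inv addrC.
  + by rewrite (lmZ p1) (lmB p1) inv -scalerN opprB.
  + rewrite -scalerDr addrACA subrr addr0 -mulr2n -scaler_nat scalerA.
    by rewrite mulVf // scale1r.
- move=> x; rewrite /grading_of => h0 h1.
  have : (2%:R : F) *: x = 0.
    by rewrite scaler_nat mulr2n -{1}h0 h1 addNr.
  by move/eqP; rewrite scaler_eq0 (negbTE two_nz) /= => /eqP.
- move=> b c x y; rewrite /grading_of -!EME p2.
  by case: b => ->; case: c => ->; rewrite /= ?EMNl ?EMNr ?opprK.
Qed.

Lemma grading_ext (phi g : E -> E) b x : phi =1 g ->
  grading_of phi b x <-> grading_of g b x.
Proof. by move=> h; rewrite /grading_of h. Qed.

End Grading.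

Section Group.
Variable F : fieldType.
Hypothesis charF0 : [pchar F] =i pred0.
Variable N : nat.
Variable T : nat -> Grass F -> Grass F.
Variable P : nat -> Grass F.
Hypothesis hT_aut : forall j, (0 < j <= N)%N -> alg_aut (T j).
Hypothesis hT_fix : forall j i, (0 < j <= N)%N -> (0 < i)%N -> i != j ->
              T j (egen F i) = egen F i.
Hypothesis hT_n : forall j, (0 < j <= N)%N -> T j (egen F j) = - egen F j + 2%:R *: P j.
Hypothesis hP_N : forall j, (0 < j <= N)%N -> Eavoid N (P j) /\ Eodd (P j).
Local Notation E := (Grass F).
Local Notation e a := (<< [fset a] >> : E).

Lemma two_nz : (2%:R : F) != 0.
Proof. by have := charF0 2%N; rewrite !inE /= => ->. Qed.

Definition Good (b : nat -> bool) (g : E -> E) :=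
  alg_aut g /\ forall a, g (e a) =
     if (a < N)%N && b a.+1 then - e a + 2%:R *: P a.+1 else e a.

Lemma Good_AH b g : Good b g -> AH g.
Proof. by case=> /aut_AH. Qed.

Lemma Good_fixP b g k : Good b g -> (0 < k <= N)%N -> g (P k) = P k.
Proof.
move=> hg hk; have [av _] := hP_N hk.
have := @agree F g id (P k) (Good_AH hg) (@AH_id F); apply => A a hA ha /=.
have := av A hA a ha => Na; case: hg => _ ->.
by rewrite ltnNge Na.
Qed.

Lemma Good_T j : (0 < j <= N)%N -> Good (fun i => i == j) (T j).
Proof.
move=> hj; split; first exact: hT_aut.
move=> a /=; have [ej|nj] := eqVneq a.+1 j.
  have aN : (a < N)%N by rewrite -ej in hj; case/andP: hj.
  rewrite aN /=; have := hT_n hj; rewrite -ej /egen /=.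
  by [].
rewrite andbF; have := hT_fix hj (ltn0Sn a) nj.
by rewrite /egen /=.
Qed.

Lemma alg_aut_comp (g h : E -> E) : alg_aut g -> alg_aut h -> alg_aut (g \o h).
Proof.
move=> [g1 g2 g3 g4] [h1 h2 h3 h4]; split => /=.
- by move=> a x y; rewrite h1 g1.
- by move=> x y; rewrite h2 g2.
- by rewrite h3 g3.
- exact: bij_comp.
Qed.

Lemma Good_comp b c g h : Good b g -> Good c h ->
  Good (fun i => b i (+) c i) (g \o h).
Proof.
move=> hg hh; have [ga gv] := hg; have [ha hv] := hh.
split; first exact: alg_aut_comp.
have [g1 _ _] := Good_AH hg.
move=> a /=; rewrite hv.
case: (ltnP a N) => aN /=; last by rewrite gv ltnNge aN.
case: (c a.+1) => /=.
  rewrite (lmD g1) (lmN g1) (lmZ g1) (Good_fixP hg) // gv aN /=.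
  case: (b a.+1) => /=; last by [].
  by rewrite opprD opprK addrNK.
by rewrite gv aN addbF.
Qed.

Lemma Good_id : Good (fun _ => false) id.
Proof.
split; last by move=> a; rewrite andbF.
by split => //; exists id.
Qed.

Lemma Good_uniq b c g h : Good b g -> Good c h ->
  (forall j, (0 < j <= N)%N -> b j = c j) -> forall x, g x = h x.
Proof.
move=> hg hh bc x; apply: (agree_all _ (Good_AH hg) (Good_AH hh)) => a.
case: hg => _ ->; case: hh => _ ->.
by case: (ltnP a N) => aN //=; rewrite bc.
Qed.

Lemma Good_ext b c g : (forall j, b j = c j) -> Good b g -> Good c g.
Proof.
move=> bc [ga gv]; split => // a; rewrite gv bc //.
Qed.

Lemma TT2 j : (0 < j <= N)%N -> forall x, T j (T j x) = x.
Proof.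
move=> hj x.
have h := Good_comp (Good_T hj) (Good_T hj).
by rewrite -[T j (T j x)]/((T j \o T j) x) (Good_uniq h Good_id) // => i _; rewrite addbb.
Qed.

Lemma in_gen_Good f : in_gen T N f -> exists b g, Good b g /\ forall x, f x = g x.
Proof.
elim => [|j f0 hj hf [b [g [hg fg]]]|j g0 f0 hj c1 c2 hf [b [g [hg fg]]]].
- by exists (fun _ => false), id; split => //; exact: Good_id.
- exists (fun i => (i == j) (+) b i), (T j \o g); split.
    exact: Good_comp (Good_T hj) hg.
  by move=> x /=; rewrite fg.
- exists (fun i => (i == j) (+) b i), (T j \o g); split.
    exact: Good_comp (Good_T hj) hg.
  move=> x /=; rewrite -fg.
  by rewrite -{1}(TT2 hj (g0 (f0 x))) c2.
Qed.

Lemma part1 f g : in_gen T N f -> in_gen T N g -> forall x, (f \o g) x = (g \o f) x.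
Proof.
move=> /in_gen_Good [b [f' [hf ff]]] /in_gen_Good [c [g' [hg gg]]] x /=.
rewrite !ff !gg -[f' (g' x)]/((f' \o g') x) -[g' (f' x)]/((g' \o f') x).
apply: (Good_uniq (Good_comp hf hg) (Good_comp hg hf)) => j _.
by rewrite addbC.
Qed.

Lemma part3 phi : in_gen T N phi ->
  (forall x, (phi \o phi) x = id x) /\ Z2grading (grading_of phi).
Proof.
move=> /in_gen_Good [b [g [hg pg]]].
have inv : forall x, g (g x) = x.
  move=> x; rewrite -[g (g x)]/((g \o g) x).
  by rewrite (Good_uniq (Good_comp hg hg) Good_id) // => j _; rewrite addbb.
split; first by move=> x /=; rewrite !pg inv.
apply: (grading_Z2 two_nz (AH_ext (Good_AH hg) pg)).
by move=> x; rewrite !pg inv.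
Qed.

End Group.
Section Part2.
Variable F : fieldType.
Hypothesis charF0 : [pchar F] =i pred0.
Variable N : nat.
Variable T : nat -> Grass F -> Grass F.
Variable P : nat -> Grass F.
Hypothesis hT_aut : forall j, (0 < j <= N)%N -> alg_aut (T j).
Hypothesis hT_fix : forall j i, (0 < j <= N)%N -> (0 < i)%N -> i != j ->
              T j (egen F i) = egen F i.
Hypothesis hT_n : forall j, (0 < j <= N)%N -> T j (egen F j) = - egen F j + 2%:R *: P j.
Hypothesis hP_N : forall j, (0 < j <= N)%N -> Eavoid N (P j) /\ Eodd (P j).
Local Notation E := (Grass F).
Local Notation e a := (<< [fset a] >> : E).
Local Notation Good := (Good N P).

Definition TT (js : seq nat) : E -> E := foldr (fun j f => T j \o f) id js.

Lemma TT_in_gen js : all (fun j => (0 < j <= N)%N) js -> in_gen T N (TT js).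
Proof.
rewrite /TT; elim: js => [|j js IH] /=; first by move=> _; exact: gen_id.
by case/andP => hj a; apply: gen_l => //; apply: IH.
Qed.

Lemma TT_Good js : uniq js -> all (fun j => (0 < j <= N)%N) js ->
  Good (fun i => i \in js) (TT js).
Proof.
rewrite /TT; elim: js => [|j js IH] /=.
  by move=> _ _; apply: (Good_ext _ (Good_id N P)) => i; rewrite in_nil.
case/andP => jn u; case/andP => hj a.
apply: (Good_ext _ (Good_comp hP_N (Good_T hT_aut hT_fix hT_n hj) (IH u a))) => i.
rewrite in_cons; case: eqP => [->|] /=; last by [].
by rewrite (negbTE jn).
Qed.

Lemma neq_e m : (m < N)%N -> - e m + 2%:R *: P m.+1 != e m.
Proof.
move=> mN; apply/eqP => /(congr1 (mcoeff [fset m])).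
rewrite mcoeffD mcoeffN mcoeffZ !mcoeffUU.
have hm : (0 < m.+1 <= N)%N by rewrite /= mN.
have [av _] := hP_N hm.
rewrite (@mcoeff_outdom _ _ (P m.+1) [fset m]); last first.
  apply/negP => /av /(_ m); rewrite inE eqxx => /(_ isT).
  by rewrite leqNgt mN.
rewrite mulr0 addr0 => h; move: (two_nz charF0).
by rewrite mulr2n -{1}h addNr eqxx.
Qed.

Definition Bt := {ffun 'I_N -> bool}.
Lemma cardB : #|{: Bt}| = (2 ^ N)%N.
Proof. by rewrite card_ffun card_bool card_ord. Qed.

Definition ev (i : 'I_(2 ^ N)) : Bt := enum_val (cast_ord (esym cardB) i).

Definition js_of (v : Bt) : seq nat := [seq (val k).+1 | k <- enum 'I_N & v k].

Lemma sinj : injective (fun k : 'I_N => (val k).+1).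
Proof. by move=> k1 k2 /succn_inj /val_inj. Qed.

Lemma js_uniq v : uniq (js_of v).
Proof. by rewrite (map_inj_uniq sinj) filter_uniq // enum_uniq. Qed.

Lemma js_all v : all (fun j => (0 < j <= N)%N) (js_of v).
Proof. by apply/allP => j /mapP [k _ ->] /=; rewrite ltn_ord. Qed.

Lemma mem_js v (k : 'I_N) : ((val k).+1 \in js_of v) = v k.
Proof.
by rewrite (mem_map sinj) mem_filter mem_enum andbT.
Qed.

Lemma part2 : exists h : 'I_(2 ^ N) -> (E -> E),
      (forall i, in_gen T N (h i)) /\
      (forall i k, h i =1 h k -> i = k) /\
      (forall f, in_gen T N f -> exists i, f =1 h i).
Proof.
exists (fun i => TT (js_of (ev i))); split; last split.
- by move=> i; apply: TT_in_gen; exact: js_all.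
- move=> i k hik.
  have Gi := TT_Good (js_uniq (ev i)) (js_all (ev i)).
  have Gk := TT_Good (js_uniq (ev k)) (js_all (ev k)).
  suff : ev i = ev k by move/enum_val_inj/cast_ord_inj.
  apply/ffunP => m; apply/eqP/negP => neq.
  have := hik (e (val m)); case: Gi => _ ->; case: Gk => _ ->.
  rewrite ltn_ord /= !mem_js.
  move: neq; case: (ev i m); case: (ev k m) => //= _.
    by move=> h; apply: (negP (neq_e (ltn_ord m))); apply/eqP.
  by move=> h; apply: (negP (neq_e (ltn_ord m))); apply/eqP; rewrite -h.
- move=> f /(in_gen_Good hT_aut hT_fix hT_n hP_N) [b [g [hg fg]]].
  pose v : Bt := [ffun k : 'I_N => b (val k).+1].
  exists (cast_ord cardB (enum_rank v)) => x.
  have ev_v : ev (cast_ord cardB (enum_rank v)) = v.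
    by rewrite /ev cast_ordK enum_rankK.
  rewrite fg ev_v; apply: (Good_uniq hg (TT_Good (js_uniq v) (js_all v))).
  move=> j /andP [j0 jN].
  have jm : (j.-1 < N)%N by rewrite prednK.
  have -> : j = (val (Ordinal jm)).+1 by rewrite /= prednK.
  by rewrite mem_js ffunE.
Qed.
End Part2.
Section Part4.
Variable F : fieldType.
Hypothesis charF0 : [pchar F] =i pred0.
Variable N : nat.
Variable T : nat -> Grass F -> Grass F.
Variable P : nat -> Grass F.
Hypothesis hT_aut : forall j, (0 < j <= N)%N -> alg_aut (T j).
Hypothesis hT_fix : forall j i, (0 < j <= N)%N -> (0 < i)%N -> i != j ->
              T j (egen F i) = egen F i.
Hypothesis hT_n : forall j, (0 < j <= N)%N -> T j (egen F j) = - egen F j + 2%:R *: P j.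
Hypothesis hP_N : forall j, (0 < j <= N)%N -> Eavoid N (P j) /\ Eodd (P j).
Variable js : seq nat.
Hypothesis js_u : uniq js.
Hypothesis js_a : all (fun j => (0 < j <= N)%N) js.
Local Notation E := (Grass F).
Local Notation e a := (<< [fset a] >> : E).
Local Notation s := (size js).
Local Notation tnz := (two_nz charF0).

Lemma js_range j : j \in js -> (0 < j <= N)%N.
Proof. by move/(allP js_a). Qed.

Definition Sl := [seq j.-1 | j <- js].
Definition rest := [seq a <- iota 0 N | a \notin Sl].
Definition L := Sl ++ rest.

Lemma memSl a : (a \in Sl) = (a.+1 \in js).
Proof.
apply/mapP/idP => [[j jin ->]|h]; last by exists a.+1.
by rewrite prednK //; case/andP: (js_range jin).
Qed.

Lemma Sl_lt a : a \in Sl -> (a < N)%N.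
Proof. by rewrite memSl => /js_range /andP[]. Qed.

Lemma uniqL : uniq L.
Proof.
rewrite cat_uniq; apply/and3P; split.
- rewrite map_inj_in_uniq // => j1 j2 h1 h2 /= h.
  have [/andP[p1 _] /andP[p2 _]] := (js_range h1, js_range h2).
  by rewrite -(prednK p1) -(prednK p2) h.
- by apply/hasPn => x; rewrite mem_filter => /andP[].
- by rewrite filter_uniq // iota_uniq.
Qed.

Lemma memL a : (a \in L) = (a < N)%N.
Proof.
rewrite mem_cat mem_filter mem_iota add0n /=.
by case h: (a \in Sl) => //=; rewrite (Sl_lt h).
Qed.

Lemma sizeL : size L = N.
Proof.
have p : perm_eq L (iota 0 N).
  by apply: uniq_perm; [exact: uniqL | exact: iota_uniq | move=> a; rewrite memL mem_iota].
by rewrite (perm_size p) size_iota.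
Qed.

Lemma s_le_N : (s <= N)%N.
Proof. by rewrite -sizeL size_cat /Sl size_map leq_addr. Qed.

Definition pi a := if (a < N)%N then index a L else a.
Definition pinv b := if (b < N)%N then nth 0%N L b else b.

Lemma pinvK b : pi (pinv b) = b.
Proof.
rewrite /pi /pinv; case bN: (b < N)%N => /=; last by rewrite bN.
have hb : (b < size L)%N by rewrite sizeL.
have : nth 0%N L b \in L by exact: mem_nth.
by rewrite memL => ->; rewrite index_uniq // uniqL.
Qed.

Lemma piK a : pinv (pi a) = a.
Proof.
rewrite /pi /pinv; case aN: (a < N)%N => /=; last by rewrite aN.
have aL : a \in L by rewrite memL.
by rewrite -sizeL index_mem aL nth_index.
Qed.

Lemma pi_big a : (N <= a)%N -> pi a = a.
Proof. by rewrite /pi leqNgt => /negbTE ->. Qed.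

Lemma pi_S a : a.+1 \in js -> (pi a < s)%N.
Proof.
rewrite -memSl => h; rewrite /pi (Sl_lt h) /L index_cat h.
by rewrite -(size_map predn js) index_mem.
Qed.

Lemma pi_nS a : a.+1 \notin js -> (s <= pi a)%N.
Proof.
rewrite -memSl => h; rewrite /pi; case aN: (a < N)%N.
  by rewrite /L index_cat (negbTE h) /Sl size_map leq_addr.
by apply: leq_trans s_le_N _; rewrite leqNgt aN.
Qed.

Definition Q a : E := if a.+1 \in js then P a.+1 else 0.

Lemma Q_odd a : Eodd (Q a).
Proof. rewrite /Q; case: ifP => h; [exact: (hP_N (js_range h)).2 | exact: Eodd0]. Qed.

Lemma Q_avoid a : forall A b, A \in msupp (Q a) -> b \in A -> (N <= b)%N.
Proof.
rewrite /Q; case: ifP => h.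
  by move=> A b hA hb; exact: (hP_N (js_range h)).1 A hA b hb.
by move=> A b; rewrite msupp0 inE.
Qed.

Lemma Q_big a : (N <= a)%N -> Q a = 0.
Proof.
move=> aN; rewrite /Q; case: ifP => // /js_range /andP[_].
by rewrite ltnNge aN.
Qed.

Definition u a : E := e (pi a) + Q a.
Definition v b : E := e (pinv b) - Q (pinv b).
Definition d a : E := if (a < s)%N then - e a else e a.

Lemma u_odd a : Eodd (u a).
Proof. by apply: EoddD; [exact: Eodd1 | exact: Q_odd]. Qed.
Lemma v_odd a : Eodd (v a).
Proof. by apply: EoddD; [exact: Eodd1 | apply: EoddN; exact: Q_odd]. Qed.
Lemma d_odd a : Eodd (d a).
Proof. by rewrite /d; case: ifP => _; [apply: EoddN|]; exact: Eodd1. Qed.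

Local Notation psi := (Subst u).
Local Notation psiI := (Subst v).
Local Notation D := (Subst d).

Lemma psi_AH : AH psi. Proof. exact: (Subst_AH tnz u_odd). Qed.
Lemma psiI_AH : AH psiI. Proof. exact: (Subst_AH tnz v_odd). Qed.
Lemma D_AH : AH D. Proof. exact: (Subst_AH tnz d_odd). Qed.

Lemma fix_big g : AH g -> (forall b, (N <= b)%N -> g (e b) = e b) ->
  forall x : E, (forall A b, A \in msupp x -> b \in A -> (N <= b)%N) -> g x = x.
Proof.
move=> hg gb x hx.
have := @agree F g id x hg (@AH_id F); apply => A a hA ha /=.
by apply: gb; exact: hx hA ha.
Qed.

Lemma psi_big b : (N <= b)%N -> psi (e b) = e b.
Proof. by move=> bN; rewrite Subst_gen /u pi_big // Q_big // addr0. Qed.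
Lemma psiI_big b : (N <= b)%N -> psiI (e b) = e b.
Proof.
move=> bN; rewrite Subst_gen /v /pinv ltnNge bN /= Q_big //.
by rewrite subr0.
Qed.
Lemma D_big b : (N <= b)%N -> D (e b) = e b.
Proof.
move=> bN; rewrite Subst_gen /d ltnNge (leq_trans s_le_N bN) //.
Qed.

Lemma psi_Q a : psi (Q a) = Q a.
Proof. exact: (fix_big psi_AH psi_big (@Q_avoid a)). Qed.
Lemma psiI_Q a : psiI (Q a) = Q a.
Proof. exact: (fix_big psiI_AH psiI_big (@Q_avoid a)). Qed.
Lemma D_Q a : D (Q a) = Q a.
Proof. exact: (fix_big D_AH D_big (@Q_avoid a)). Qed.

Lemma psiK x : psi (psiI x) = x.
Proof.
have := @agree_all F (psi \o psiI) id x (AH_comp psi_AH psiI_AH) (@AH_id F).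
apply => b /=; rewrite Subst_gen /v.
have [l1 _ _] := psi_AH.
rewrite (lmB l1) Subst_gen psi_Q /u pinvK.
by rewrite addrK.
Qed.

Lemma psiIK x : psiI (psi x) = x.
Proof.
have := @agree_all F (psiI \o psi) id x (AH_comp psiI_AH psi_AH) (@AH_id F).
apply => a /=; rewrite Subst_gen /u.
have [l1 _ _] := psiI_AH.
rewrite (lmD l1) Subst_gen psiI_Q /v piK.
by rewrite subrK.
Qed.

Lemma psi_aut : alg_aut psi.
Proof.
have [p1 p2 p3] := psi_AH; split => //.
  by move=> x y; rewrite -!EME.
by exists psiI; [exact: psiIK | exact: psiK].
Qed.


Definition sg (A : mon) : F := (-1) ^+ (\sum_(a <- A) nat_of_bool (a < s)%N)%N.

Lemma D_mon A : D << A >> = sg A *: << A >>.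
Proof.
move: A; apply: mon_ind.
  by rewrite /sg big_seq_fset0 expr0 scale1r -/(Eone F) Subst1.
move=> c A cA cmin IH.
have [_ Dm _] := D_AH.
rewrite (mon_split F cA cmin) Dm IH Subst_gen EMZr /sg big_fsetU1 //= /d.
case: ifP => cs /=.
  by rewrite EMNl scalerN -scaleNr exprD expr1 mulN1r.
by rewrite add0n.
Qed.

Lemma coef_lin (c : mon -> F) (y : E) A :
  (\sum_(B <- msupp y) y@_B *: (c B *: << B >>))@_A = y@_A * c A.
Proof.
rewrite raddf_sum /=.
have h : forall B, (y@_B *: (c B *: (<< B >> : E)))@_A = if B == A then y@_A * c A else 0.
  by move=> B; rewrite !mcoeffZ mcoeffU; case: eqP => [->|_]; rewrite ?mulr1 ?mulr0.
under eq_bigr => B _ do rewrite h.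
have [yA|yA] := boolP (A \in msupp y).
  rewrite (big_fsetD1 A) //= eqxx big1_fset ?addr0 // => B.
  by rewrite !inE => /andP[/negbTE -> _].
rewrite big1_fset; first by rewrite mcoeff_outdom // mul0r.
by move=> B hB _; case: eqP => // eBA; rewrite -eBA hB in yA.
Qed.

Lemma Dcoef (y : E) A : (D y)@_A = y@_A * sg A.
Proof.
have [l1 _ _] := D_AH.
rewrite (lin_expand _ l1) linE.
rewrite -coef_lin; congr (_ @_ _); apply: eq_bigr => B _; by rewrite D_mon.
Qed.

Lemma card_sep (A : mon) :
  #|` [fset a in A | (a < s)%N]| = (\sum_(a <- A) nat_of_bool (a < s)%N)%N.
Proof.
rewrite card_fset_sum1 -big_fset_condE big_mkcond /=.
by apply: eq_bigr => a _; case: (a < s)%N.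
Qed.

Lemma sg_val A : sg A = (-1) ^+ odd #|` [fset a in A | (a < s)%N]|.
Proof. by rewrite card_sep /sg signr_odd. Qed.

Lemma D_star (y : E) b : (D y = if b then - y else y) <-> grading_star s b y.
Proof.
split.
  move=> hD A hA; move: (congr1 (mcoeff A) hD); clear hD.
  rewrite Dcoef sg_val.
  have nz : y@_A != 0 by rewrite mcoeff_neq0.
  case: b; rewrite ?mcoeffN.
    case: (odd _) => //=; rewrite expr0 mulr1 => h.
    have h2 : (2%:R : F) * y@_A = 0 by rewrite mulr2n mulrDl mul1r {1}h addNr.
    by move/eqP: h2; rewrite mulf_eq0 (negbTE tnz) (negbTE nz).
  case: (odd _) => //=; rewrite expr1 mulrN1 => h.
  have h2 : (2%:R : F) * y@_A = 0 by rewrite mulr2n mulrDl mul1r -{2}h addrN.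
  by move/eqP: h2; rewrite mulf_eq0 (negbTE tnz) (negbTE nz).
move=> hs; apply/malgP => A; rewrite Dcoef sg_val.
have [yA|yA] := boolP (A \in msupp y); last first.
  by clear hs; case: b; rewrite ?mcoeffN (mcoeff_outdom yA) ?oppr0 mul0r.
rewrite (hs A yA); clear hs; case: b; rewrite ?mcoeffN /=.
  by rewrite expr1 mulrN1.
by rewrite expr0 mulr1.
Qed.

Lemma phi_Good : Good N P (fun i => i \in js) (TT T js).
Proof. exact: (TT_Good hT_aut hT_fix hT_n hP_N js_u js_a). Qed.

Lemma intertwine x : psi (TT T js x) = D (psi x).
Proof.
have hphi := Good_AH phi_Good.
have := @agree_all F (psi \o TT T js) (D \o psi) x (AH_comp psi_AH hphi) (AH_comp D_AH psi_AH).
apply => a /=; case: phi_Good => _ ->.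
have [l1 _ _] := psi_AH; have [l2 _ _] := D_AH.
case h: (a.+1 \in js).
  have aN : (a < N)%N by case/andP: (js_range h).
  rewrite aN /= (lmD l1) (lmN l1) (lmZ l1) Subst_gen.
  have hQ : Q a = P a.+1 by rewrite /Q h.
  rewrite -hQ psi_Q /u (lmD l2) Subst_gen D_Q /d (pi_S h).
  rewrite scaler_nat mulr2n opprD -addrA (addrA (- Q a)) addNr add0r //.
rewrite andbF Subst_gen /u /Q h addr0 Subst_gen /d ltnNge pi_nS ?h //.
Qed.

Lemma part4 : Z2iso (grading_of (TT T js)) (grading_star s).
Proof.
exists psi; split; first exact: psi_aut.
have [l1 _ _] := psi_AH.
move=> b x; rewrite -D_star -intertwine /grading_of.
split.
  by case: b => ->; rewrite ?(lmN l1).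
case: b => h.
  by rewrite -(psiIK (TT T js x)) h -(lmN l1) psiIK.
by rewrite -(psiIK (TT T js x)) h psiIK.
Qed.

End Part4.
Unset Implicit Arguments.

Theorem mainTheorem7 (F : fieldType) (charF0 : [pchar F] =i pred0)
  (N : nat) (T : nat -> Grass F -> Grass F) (P : nat -> Grass F)
  (hT_aut : forall j, (0 < j <= N)%N -> alg_aut (T j))
  (hT_fix : forall j i, (0 < j <= N)%N -> (0 < i)%N -> i != j ->
              T j (egen F i) = egen F i)
  (hT_n : forall j, (0 < j <= N)%N -> T j (egen F j) = - egen F j + 2%:R *: P j)
  (hP_tri : forall j, (0 < j <= N)%N -> Eavoid j (P j) /\ Eodd (P j))
  (hP_N : forall j, (0 < j <= N)%N -> Eavoid N (P j) /\ Eodd (P j)) :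
  (* (1) abelian *)
  (forall f g, in_gen T N f -> in_gen T N g -> f \o g =1 g \o f) /\
  (* (2) order 2^N *)
  (exists h : 'I_(2 ^ N) -> (Grass F -> Grass F),
      (forall i, in_gen T N (h i)) /\
      (forall i k, h i =1 h k -> i = k) /\
      (forall f, in_gen T N f -> exists i, f =1 h i)) /\
  (* (3) involutions, inducing Z2-gradings *)
  (forall phi, in_gen T N phi ->
      phi \o phi =1 id /\ Z2grading (grading_of phi)) /\
  (* (4) *)
  (forall js : seq nat, uniq js -> all (fun j => 0 < j <= N)%N js ->
      Z2iso (grading_of (foldr (fun j f => T j \o f) id js))
            (grading_star (F:=F) (size js))).
Proof.
split.
  move=> f g hf hg x.
  exact: (part1 hT_aut hT_fix hT_n hP_N hf hg x).
split.
  exact: (part2 charF0 hT_aut hT_fix hT_n hP_N).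
split.
  move=> phi hphi.
  exact: (part3 charF0 hT_aut hT_fix hT_n hP_N hphi).
move=> js hu ha.
exact: (part4 charF0 hT_aut hT_fix hT_n hP_N hu ha).
Qed.
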